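(* Let $\mathscr H$ be a complex Hilbert space and let $\mathbf{T}=(T_1,\dots,T_d)\in\mathbb{B}(\mathscr H)^d$ be a normal $d$-tuple. Then $$\|\mathbf{T}^2\|=\|(T_1^*T_1,T_2^*T_2,\dots,T_d^*T_d)\|\le\|\mathbf{T}\|^2=\|\mathbf{T}^*\|^2\le\sqrt{d}\,\|\mathbf{T}^2\|.$$
   Context: $\mathbb{B}(\mathscr H)$ denotes the bounded linear operators on $\mathscr H$. A $d$-tuple $\mathbf{T}=(T_1,\dots,T_d)$ is normal if $T_iT_j=T_jT_i$ for all $i,j$ and each $T_i$ is a normal operator. The joint operator norm is $\|\mathbf{T}\|=\sup\{(\sum_{k=1}^d\|T_kx\|^2)^{1/2}: x\in\mathscr H,\|x\|=1\}$. Operations are componentwise: $\mathbf{T}^2=(T_1^2,\dots,T_d^2)$, $\mathbf{T}^*=(T_1^*,\dots,T_d^* )$. *)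

(* Defs.v *)
From HB Require Import structures.
From mathcomp Require Import all_boot all_order all_algebra.
From mathcomp Require Import complex.
From mathcomp Require Import boolp classical_sets reals.
Set Implicit Arguments. Unset Strict Implicit. Unset Printing Implicit Defensive.
Import Order.TTheory GRing.Theory Num.Theory.
Local Open Scope ring_scope.
Local Open Scope classical_set_scope.

Section Hilbert.
Variables (R : realType) (V : lmodType R[i]) (ip : V -> V -> R[i]).

Definition inner_product_axioms : Prop :=
  [/\ forall (a : R[i]) (x y z : V), ip (a *: x + y) z = a * ip x z + ip y z,
      forall x y : V, ip y x = conjc (ip x y),
      forall x : V, 0 <= ip x x &
      forall x : V, ip x x = 0 -> x = 0].

Definition hnorm (x : V) : R := Num.sqrt (complex.Re (ip x x)).

Definition hcauchy (u : nat -> V) : Prop :=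
  forall e : R, 0 < e -> exists N : nat, forall m n : nat,
    (N <= m)%N -> (N <= n)%N -> hnorm (u m - u n) < e.

Definition hconverges (u : nat -> V) (l : V) : Prop :=
  forall e : R, 0 < e -> exists N : nat, forall n : nat,
    (N <= n)%N -> hnorm (u n - l) < e.

Definition is_hilbert_space : Prop :=
  inner_product_axioms /\
  forall u : nat -> V, hcauchy u -> exists l : V, hconverges u l.

Definition bounded_operator (T : V -> V) : Prop :=
  (forall (a : R[i]) (x y : V), T (a *: x + y) = a *: T x + T y) /\
  exists C : R, forall x : V, hnorm (T x) <= C * hnorm x.

Definition is_adjoint (T S : V -> V) : Prop :=
  forall x y : V, ip (T x) y = ip x (S y).

Definition joint_norm (d : nat) (T : 'I_d -> V -> V) : R :=
  sup [set r : R | exists x : V, hnorm x = 1 /\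
         r = Num.sqrt (\sum_(k < d) hnorm (T k x) ^+ 2)].

Definition normal_tuple (d : nat) (T Tadj : 'I_d -> V -> V) : Prop :=
  (forall i j : 'I_d, T i \o T j = T j \o T i) /\
  (forall i : 'I_d, Tadj i \o T i = T i \o Tadj i).

End Hilbert.

(* Main.v *)
Require Import Defs.
From HB Require Import structures.
From mathcomp Require Import all_boot all_order all_algebra.
From mathcomp Require Import complex.
From mathcomp Require Import boolp classical_sets reals.
From mathcomp Require Import ring lra.
Import Order.TTheory GRing.Theory Num.Theory.
Local Open Scope ring_scope.
Local Open Scope complex_scope.
Local Open Scope classical_set_scope.

Lemma dCS (R : realType) d (a : 'I_d -> R) : (\sum_k a k)^+2 <= d%:R * \sum_k a k ^+2.
Proof.
rewrite expr2 mulr_suml; under eq_bigr do rewrite mulr_sumr.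
apply: (@le_trans _ _ (\sum_(j < d) \sum_(k < d) (a j ^+ 2 / 2 + a k ^+ 2 / 2))).
  apply: ler_sum => j _; apply: ler_sum => k _.
  have := sqr_ge0 (a j - a k); nra.
under eq_bigr do rewrite big_split /= sumr_const card_ord.
rewrite big_split /= sumr_const card_ord sumrMnl.
by rewrite -mulr_suml -mulrnDl -splitr mulr_natl.
Qed.

Lemma dCS2 (R : realType) d (a : 'I_d -> R) : \sum_k a k <= Num.sqrt (d%:R) * Num.sqrt (\sum_k a k ^+2).
Proof.
rewrite -sqrtrM //; apply: le_trans (ler_norm _) _; rewrite -sqrtr_sqr ler_sqrt ?dCS //.
by rewrite mulr_ge0 // sumr_ge0 // => i _; rewrite sqr_ge0.
Qed.

Lemma sup_le_bound (R : realType) (E : set R) b : 0 <= b -> (forall r, E r -> r <= b) -> sup E <= b.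
Proof.
move=> b0 H; have [[r Er]|ne] := pselect (E !=set0).
  by apply: ge_sup; [exists r | exact: H].
have -> : E = set0 by apply/seteqP; split => r Er //; exfalso; apply: ne; exists r.
by rewrite sup0.
Qed.

Lemma sup_ge0' (R : realType) (E : set R) : has_ubound E -> (forall r, E r -> 0 <= r) -> 0 <= sup E.
Proof.
move=> hu H; have [[r Er]|ne] := pselect (E !=set0).
  by apply: le_trans (H r Er) _; apply: ub_le_sup.
have -> : E = set0 by apply/seteqP; split => r Er //; exfalso; apply: ne; exists r.
by rewrite sup0.
Qed.

Section S.
Context {R : realType} {V : lmodType R[i]} {ip : V -> V -> R[i]}.
Hypothesis Hip : inner_product_axioms ip.

Lemma ip0l z : ip 0 z = 0.
Proof.
case: Hip => H _ _ _.
have := H (-1) 0 0 z; rewrite scaler0 addr0 mulN1r addNr; by move<-.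
Qed.

Lemma ipZl a x z : ip (a *: x) z = a * ip x z.
Proof. by case: Hip => H _ _ _; rewrite -[a *: x]addr0 H ip0l addr0. Qed.

Lemma ipDl x y z : ip (x + y) z = ip x z + ip y z.
Proof. by case: Hip => H _ _ _; have := H 1 x y z; rewrite scale1r mul1r. Qed.

Lemma ipNl x z : ip (- x) z = - ip x z.
Proof. by rewrite -scaleN1r ipZl mulN1r. Qed.

Lemma ipC x y : ip y x = conjc (ip x y).
Proof. by case: Hip. Qed.

Lemma ipDr x y z : ip z (x + y) = ip z x + ip z y.
Proof. by rewrite (ipC (x+y) z) ipDl rmorphD (ipC x z) (ipC y z). Qed.

Lemma ipNr x z : ip z (- x) = - ip z x.
Proof. by rewrite (ipC (-x) z) ipNl rmorphN (ipC x z). Qed.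

Lemma ipZr a x z : ip z (a *: x) = conjc a * ip z x.
Proof. by rewrite (ipC (a*:x) z) ipZl rmorphM (ipC x z). Qed.

Lemma Re_conj (z : R[i]) : complex.Re (conjc z) = complex.Re z.
Proof. by case: z. Qed.

Lemma ReMC (k : R) (z : R[i]) : complex.Re (k%:C * z) = k * complex.Re z.
Proof. case: z => a b /=. by rewrite mul0r subr0. Qed.

Lemma ReD (y z : R[i]) : complex.Re (y + z) = complex.Re y + complex.Re z.
Proof. by case: y; case: z. Qed.

Lemma ReN (z : R[i]) : complex.Re (- z) = - complex.Re z.
Proof. by case: z. Qed.

Lemma n2_ge0 x : 0 <= complex.Re (ip x x).
Proof. case: Hip => _ _ H _. by have := H x; rewrite lecE => /andP[_]. Qed.

Lemma hnorm2 x : hnorm ip x ^+ 2 = complex.Re (ip x x).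
Proof. by rewrite /hnorm sqr_sqrtr // n2_ge0. Qed.

Lemma hnorm_ge0 x : 0 <= hnorm ip x.
Proof. exact: sqrtr_ge0. Qed.

Lemma conj_ge0_id (z : R[i]) : 0 <= z -> conjc z = z.
Proof. case: z => a b; rewrite lecE /= => /andP[/eqP -> _]. by rewrite oppr0. Qed.

Lemma ipxx_ge0 x : 0 <= ip x x.
Proof. by case: Hip. Qed.

Lemma hnormZ (c : R) x : 0 <= c -> hnorm ip (c%:C *: x) = c * hnorm ip x.
Proof.
move=> c0; rewrite /hnorm ipZl ipZr conjc_real mulrA -rmorphM ReMC.
by rewrite sqrtrM ?mulr_ge0 // sqrtr_sqr ger0_norm.
Qed.


Lemma expand (l : R) x w :
  complex.Re (ip (l%:C *: x - w) (l%:C *: x - w)) =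
  l ^+ 2 * complex.Re (ip x x) - (l * complex.Re (ip x w)) *+ 2 + complex.Re (ip w w).
Proof.
rewrite !ipDl !ipDr !ipZl !ipNl !ipZr !ipNr ?ipZl ?ipNl conjc_real.
rewrite (ipC x w) !ReD !ReN !mulrA -rmorphM !ReMC Re_conj.
rewrite ?ReN; ring.
Qed.

Lemma CS x w : hnorm ip x = 1 -> complex.Re (ip x w) <= hnorm ip w.
Proof.
move=> hx.
have hxx : complex.Re (ip x x) = 1 by rewrite -hnorm2 hx expr1n.
have := n2_ge0 ((complex.Re (ip x w))%:C *: x - w).
rewrite expand hxx -hnorm2 => h.
have := hnorm_ge0 w.
nra.
Qed.

End S.

Section Main.
Context (R : realType) (V : lmodType R[i]) (ip : V -> V -> R[i]) (d : nat)
  (T Tadj : 'I_d -> V -> V).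
Hypothesis Hip : inner_product_axioms ip.
Hypothesis HB : forall k, bounded_operator ip (T k).
Hypothesis HA : forall k, is_adjoint ip (T k) (Tadj k).
Hypothesis HN : normal_tuple T Tadj.

Local Notation nrm := (hnorm ip).
Let f x := \sum_(k < d) nrm (T k x) ^+ 2.
Let g x := \sum_(k < d) nrm (T k (T k x)) ^+ 2.

Lemma TZ k a x : T k (a *: x) = a *: T k x.
Proof.
case: (HB k) => H _.
have T0 : T k 0 = 0.
  by have := H (-1) 0 0; rewrite scaler0 addr0 scaleN1r addNr.
by rewrite -[a *: x]addr0 H T0 addr0.
Qed.

Lemma normal_pt k x : nrm (Tadj k x) = nrm (T k x).
Proof.
rewrite /hnorm; congr (Num.sqrt (complex.Re _)).
rewrite -HA.
have -> : T k (Tadj k x) = Tadj k (T k x).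
  by have := congr1 (fun h => h x) (HN.2 k).
rewrite (ipC Hip) -HA conj_ge0_id //; exact: ipxx_ge0 Hip _.
Qed.

Lemma f_ge0 x : 0 <= f x.
Proof. by apply: sumr_ge0 => i _; apply: sqr_ge0. Qed.

Lemma g_ge0 x : 0 <= g x.
Proof. by apply: sumr_ge0 => i _; apply: sqr_ge0. Qed.

Lemma term_le k z : nrm (T k z) ^+ 2 <= f z.
Proof.
rewrite /f (bigD1 k) //= lerDl; by apply: sumr_ge0 => i _; apply: sqr_ge0.
Qed.

Lemma C_exists : exists C : 'I_d -> R, forall k x, nrm (T k x) <= C k * nrm x.
Proof.
have [C HC] := @boolp.choice _ _ (fun k c => forall x, nrm (T k x) <= c * nrm x) (fun k => (HB k).2).
by exists C.
Qed.

Let AF := [set r | exists x, nrm x = 1 /\ r = Num.sqrt (f x)].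

Lemma AF_ub : has_ubound AF.
Proof.
have [C HC] := C_exists.
exists (Num.sqrt (\sum_(k < d) C k ^+ 2)) => r [x [hx ->]].
rewrite ler_sqrt; last by apply: sumr_ge0 => i _; apply: sqr_ge0.
apply: ler_sum => k _.
have := HC k x; rewrite hx mulr1 => h.
have := hnorm_ge0 (ip:=ip) (T k x); nra.
Qed.

Let s := joint_norm ip T.

Lemma sE : s = sup AF.
Proof. by []. Qed.

Lemma f_le x : nrm x = 1 -> f x <= s ^+ 2.
Proof.
move=> hx.
have h : Num.sqrt (f x) <= s by rewrite sE; apply: ub_le_sup; [exact: AF_ub | exists x].
have h0 := sqrtr_ge0 (f x).
rewrite -(sqr_sqrtr (f_ge0 x)); nra.
Qed.

Lemma f_zero y : nrm y = 0 -> f y = 0.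
Proof.
move=> hy; have [C HC] := C_exists.
apply: big1 => k _.
have := HC k y; rewrite hy mulr0 => h.
have := hnorm_ge0 (ip:=ip) (T k y) => h0.
have -> : nrm (T k y) = 0 by apply/eqP; rewrite eq_le h h0.
by rewrite expr0n.
Qed.

Lemma f_le_gen y : f y <= s ^+ 2 * nrm y ^+ 2.
Proof.
have n0 := hnorm_ge0 (ip:=ip) y.
have [hz|hnz] := eqVneq (nrm y) 0.
  by rewrite f_zero // hz expr0n mulr0.
set n := nrm y in n0 hnz *.
have ni0 : 0 <= n^-1 by rewrite invr_ge0.
have hx : nrm ((n^-1)%:C *: y) = 1 by rewrite (hnormZ Hip) // mulVf.
have := f_le _ hx.
have -> : f ((n^-1)%:C *: y) = n^-1 ^+ 2 * f y.
  rewrite /f mulr_sumr; apply: eq_bigr => k _.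
  by rewrite TZ (hnormZ Hip) // exprMn.
move=> h.
have -> : f y = n ^+ 2 * (n^-1 ^+ 2 * f y).
  by rewrite mulrA -exprMn mulfV // expr1n mul1r.
rewrite mulrC; apply: ler_wpM2r => //; exact: sqr_ge0.
Qed.

Lemma g_le x : nrm x = 1 -> g x <= s ^+ 4.
Proof.
move=> hx.
apply: (@le_trans _ _ (\sum_(k < d) s ^+ 2 * nrm (T k x) ^+ 2)).
  apply: ler_sum => k _; apply: le_trans (term_le k (T k x)) _.
  exact: f_le_gen.
rewrite -mulr_sumr.
have : s ^+ 4 = s ^+ 2 * s ^+ 2 by rewrite -exprD.
move=> ->; apply: ler_wpM2l; [exact: sqr_ge0 | exact: f_le].
Qed.


Lemma main_res :
  let T2 := fun k : 'I_d => T k \o T k in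
  let TadjT := fun k : 'I_d => Tadj k \o T k in
  [/\ joint_norm ip T2 = joint_norm ip TadjT,
      joint_norm ip TadjT <= joint_norm ip T ^+ 2,
      joint_norm ip T ^+ 2 = joint_norm ip Tadj ^+ 2 &
      joint_norm ip T ^+ 2 <= Num.sqrt (d%:R) * joint_norm ip T2].
Proof.
move=> T2 TadjT.
have E1 : joint_norm ip T2 = joint_norm ip TadjT.
  rewrite /joint_norm /T2 /TadjT; congr sup; apply: funext => r; apply: propext.
  split => -[x [hx ->]]; exists x; split => //; congr Num.sqrt;
    apply: eq_bigr => k _ /=; by rewrite normal_pt.
have E3 : joint_norm ip T = joint_norm ip Tadj.
  rewrite /joint_norm; congr sup; apply: funext => r; apply: propext.
  split => -[x [hx ->]]; exists x; split => //; congr Num.sqrt;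
    apply: eq_bigr => k _ /=; by rewrite normal_pt.
have ubG : forall x, nrm x = 1 -> Num.sqrt (g x) <= s ^+ 2.
  move=> x hx.
  rewrite -[s ^+ 2]ger0_norm ?sqr_ge0 // -sqrtr_sqr -exprM ler_sqrt ?g_le //.
  by rewrite exprM sqr_ge0.
split.
- exact: E1.
- rewrite -E1 /joint_norm; apply: sup_le_bound; first exact: sqr_ge0.
  move=> r [x [hx ->]]; exact: ubG x hx.
- by rewrite E3.
- set G := joint_norm ip T2.
  have hubG : has_ubound [set r | exists x, nrm x = 1 /\
         r = Num.sqrt (\sum_(k < d) nrm (T2 k x) ^+ 2)].
    by exists (s ^+ 2) => r [x [hx ->]]; exact: ubG x hx.
  have Gge : forall x, nrm x = 1 -> Num.sqrt (g x) <= G.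
    by move=> x hx; apply: ub_le_sup => //; exists x.
  have G0 : 0 <= G.
    by apply: sup_ge0' => // r [x [_ ->]]; exact: sqrtr_ge0.
  have fx : forall x, nrm x = 1 -> f x <= Num.sqrt (d%:R) * G.
    move=> x hx.
    apply: (@le_trans _ _ (\sum_(k < d) nrm (T k (T k x)))).
      rewrite /f; apply: ler_sum => k _.
      rewrite (hnorm2 Hip) (HA k x (T k x)) -(normal_pt k (T k x)); exact: CS Hip _ _ hx.
    have h := dCS2 _ _ (fun k => nrm (T k (T k x))); rewrite /= in h.
    apply: le_trans h _.
    apply: ler_wpM2l; [exact: sqrtr_ge0 | exact: Gge].
  have s0 : 0 <= s.
    by rewrite sE; apply: sup_ge0' AF_ub _ => r [x [_ ->]]; exact: sqrtr_ge0.
  have P0 : 0 <= Num.sqrt (d%:R) * G by rewrite mulr_ge0 ?sqrtr_ge0.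
  have hs : s <= Num.sqrt (Num.sqrt (d%:R) * G).
    rewrite sE; apply: sup_le_bound; first exact: sqrtr_ge0.
    move=> r [x [hx ->]]; rewrite ler_sqrt //; exact: fx.
  rewrite -/s -(sqr_sqrtr P0).
  have := sqrtr_ge0 (Num.sqrt (d%:R) * G); nra.
Qed.

End Main.

Theorem theorem2p5 (R : realType) (V : lmodType R[i]) (ip : V -> V -> R[i])
  (d : nat) (T Tadj : 'I_d -> V -> V) :
  is_hilbert_space ip ->
  (forall k : 'I_d, bounded_operator ip (T k)) ->
  (forall k : 'I_d, is_adjoint ip (T k) (Tadj k)) ->
  normal_tuple T Tadj ->
  let T2 := fun k : 'I_d => T k \o T k in
  let TadjT := fun k : 'I_d => Tadj k \o T k in
  [/\ joint_norm ip T2 = joint_norm ip TadjT,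
      joint_norm ip TadjT <= joint_norm ip T ^+ 2,
      joint_norm ip T ^+ 2 = joint_norm ip Tadj ^+ 2 &
      joint_norm ip T ^+ 2 <= Num.sqrt (d%:R) * joint_norm ip T2].
Proof.
move=> [Hip _] HB HA HN; exact: main_res.
Qed.
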